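(* Let $L$ be a split regular Hom-Lie color algebra with symmetric root system $\Lambda$, and let $U$ be a vector space complement of $\mathrm{span}_{\mathbb{K}}\{[L_\alpha,L_{-\alpha}]:\alpha\in\Lambda\}$ in $H$. For each class $[\alpha]\in\Lambda/\sim$ put $I_{[\alpha]}:=L_{\Lambda_\alpha}$. Then each $I_{[\alpha]}$ is a well-defined ideal of $L$, $$L=U+\sum_{[\alpha]\in\Lambda/\sim}I_{[\alpha]},$$ and $[I_{[\alpha]},I_{[\beta]}]=0$ whenever $[\alpha]\neq[\beta]$.
   Context: Let $\mathbb{K}$ be a field and $\Gamma$ an abelian group. A bi-character is $\varepsilon:\Gamma\times\Gamma\to\mathbb{K}\setminus\{0\}$ with $\varepsilon(a,b)\varepsilon(b,a)=1$, $\varepsilon(a,b+c)=\varepsilon(a,b)\varepsilon(a,c)$, $\varepsilon(a+b,c)=\varepsilon(a,c)\varepsilon(b,c)$. A Hom-Lie color algebra $(L,[\cdot,\cdot],\phi,\varepsilon)$ is a $\Gamma$-graded space $L=\bigoplus_gL_g$ with bilinear $[\cdot,\cdot]$, $[L_g,L_h]\subset L_{g+h}$, linear $\phi$ with $\phi(L_g)\subset L_g$, $\phi([x,y])=[\phi x,\phi y]$, such that for homogeneous $x,y,z$ of degrees $\bar x,\bar y,\bar z$: $[x,y]=-\varepsilon(\bar x,\bar y)[y,x]$ and $\varepsilon(\bar z,\bar x)[\phi(x),[y,z]]+\varepsilon(\bar x,\bar y)[\phi(y),[z,x]]+\varepsilon(\bar y,\bar z)[\phi(z),[x,y]]=0$;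 regular means $\phi$ bijective. A subalgebra is a graded subspace $A$ with $[A,A]\subset A$, $\phi(A)=A$; abelian if $[A,A]=0$. An ideal is a graded subspace $I$ with $[I,L]\subset I$ and $\phi(I)=I$. $H=\bigoplus_gH_g$ is a maximal abelian graded subalgebra (so $\phi(H_0)=H_0$). For linear $\alpha:H_0\to\mathbb{K}$, $L_\alpha=\{v:[h,v]=\alpha(h)\phi(v)\ \forall h\in H_0\}$; $\Lambda=\{\alpha\in H_0^*\setminus\{0\}:L_\alpha\neq0\}$; $L$ is split if $L=H\oplus(\bigoplus_{\alpha\in\Lambda}L_\alpha)$. $\Lambda$ is symmetric if $\alpha\in\Lambda\Rightarrow-\alpha\in\Lambda$. For $z\in\mathbb{Z}$, $\alpha\phi^{z}:=\alpha\circ(\phi|_{H_0})^{z}$; $\mathbb{N}=\{0,1,2,\dots\}$. Connection: for $\alpha,\beta\in\Lambda$, $\alpha$ is connected to $\beta$ if there exist $k\ge1$ and $\alpha_1,\dots,\alpha_k\in\Lambda$ such that: if $k=1$, $\alpha_1\in\{\alpha\phi^{-n}:n\in\mathbb{N}\}\cap\{\pm\beta\phi^{-m}:m\in\mathbb{N}\}$; if $k\ge2$, then $\alpha_1\in\{\alpha\phi^{-n}:n\in\mathbb{N}\}$, for each $i=1,\dots,k-2$ one has $\alpha_1\phi^{-i}+\alpha_2\phi^{-i}+\alpha_3\phi^{-i+1}+\cdots+\alpha_{i+1}\phi^{-1}\in\Lambda$, and $\alpha_1\phi^{-k+1}+\alpha_2\phi^{-k+1}+\alpha_3\phi^{-k+2}+\cdots+\alpha_k\phi^{-1}\in\{\pm\beta\phi^{-m}:m\in\mathbb{N}\}$.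 Connectedness $\sim$ is an equivalence relation on $\Lambda$; $\Lambda_\alpha:=\{\beta\in\Lambda:\beta\sim\alpha\}$. Define $H_{\Lambda_\alpha}:=\mathrm{span}_{\mathbb{K}}\{[L_\beta,L_{-\beta}]:\beta\in\Lambda_\alpha\}\subset H$, $V_{\Lambda_\alpha}:=\bigoplus_{\beta\in\Lambda_\alpha}L_\beta$, and $L_{\Lambda_\alpha}:=H_{\Lambda_\alpha}\oplus V_{\Lambda_\alpha}$. *)

(* Defs.v *)
(* Subspaces/subsets are Prop-valued predicates L -> Prop.
   Linear forms alpha : H_0 -> K are represented by arbitrary functions
   L -> K, only their values on H_0 matter (equality "eqH0" = agreement on H_0). *)
From HB Require Import structures.
From mathcomp Require Import all_boot all_order all_algebra.
Import GRing.Theory.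
Local Open Scope ring_scope.

Section HomLieColor.
Context {K : fieldType} {G : zmodType} {L : lmodType K}.
Variable br : L -> L -> L.
Variable phi : L -> L.
Variable phiinv : L -> L.
Variable eps : G -> G -> K.
Variable grading : G -> L -> Prop.
Variable H : L -> Prop.

Definition subspace (S : L -> Prop) : Prop :=
  S 0 /\ forall (a : K) x y, S x -> S y -> S (a *: x + y).

Definition span (P : L -> Prop) (v : L) : Prop :=
  exists n (c : 'I_n -> K) (w : 'I_n -> L),
    (forall i, P (w i)) /\ v = \sum_(i < n) c i *: w i.

Definition bicharacter : Prop :=
  (forall a b, eps a b != 0) /\
  (forall a b, eps a b * eps b a = 1) /\
  (forall a b c, eps a (b + c) = eps a b * eps a c) /\
  (forall a b c, eps (a + b) c = eps a c * eps b c).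

Definition graded_space : Prop :=
  (forall g, subspace (grading g)) /\
  (forall v, exists n (g : 'I_n -> G) (x : 'I_n -> L),
      injective g /\ (forall i, grading (g i) (x i)) /\ v = \sum_(i < n) x i) /\
  (forall n (g : 'I_n -> G) (x : 'I_n -> L),
      injective g -> (forall i, grading (g i) (x i)) ->
      \sum_(i < n) x i = 0 -> forall i, x i = 0).

Definition graded_subspace (A : L -> Prop) : Prop :=
  subspace A /\
  forall v, A v -> exists n (g : 'I_n -> G) (x : 'I_n -> L),
      injective g /\ (forall i, grading (g i) (x i) /\ A (x i)) /\
      v = \sum_(i < n) x i.

Definition HomLieColorAlgebra : Prop :=
  graded_space /\ bicharacter /\
  (forall (a : K) x y z, br (a *: x + y) z = a *: br x z + br y z) /\
  (forall (a : K) x y z, br z (a *: x + y) = a *: br z x + br z y) /\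
  (forall g h x y, grading g x -> grading h y -> grading (g + h) (br x y)) /\
  (forall (a : K) x y, phi (a *: x + y) = a *: phi x + phi y) /\
  (forall g x, grading g x -> grading g (phi x)) /\
  (forall x y, phi (br x y) = br (phi x) (phi y)) /\
  (forall g h x y, grading g x -> grading h y ->
     br x y = - (eps g h *: br y x)) /\
  (forall gx gy gz x y z, grading gx x -> grading gy y -> grading gz z ->
     eps gz gx *: br (phi x) (br y z) + eps gx gy *: br (phi y) (br z x)
     + eps gy gz *: br (phi z) (br x y) = 0).

Definition subalgebra (A : L -> Prop) : Prop :=
  graded_subspace A /\
  (forall x y, A x -> A y -> A (br x y)) /\
  (forall x, A x -> A (phi x)) /\ (forall y, A y -> exists x, A x /\ phi x = y).

Definition abelian (A : L -> Prop) : Prop :=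
  forall x y, A x -> A y -> br x y = 0.

Definition max_abelian_graded_subalgebra : Prop :=
  subalgebra H /\ abelian H /\
  forall B, subalgebra B -> abelian B -> (forall x, H x -> B x) ->
    forall x, B x -> H x.

Definition ideal (I : L -> Prop) : Prop :=
  graded_subspace I /\
  (forall x y, I x -> I (br x y)) /\
  (forall x, I x -> I (phi x)) /\ (forall y, I y -> exists x, I x /\ phi x = y).

Definition H0 (h : L) : Prop := H h /\ grading 0 h.

Definition linear_on_H0 (a : L -> K) : Prop :=
  forall (c : K) h1 h2, H0 h1 -> H0 h2 -> a (c *: h1 + h2) = c * a h1 + a h2.

Definition weight_space (a : L -> K) (v : L) : Prop :=
  forall h, H0 h -> br h v = a h *: phi v.

Definition inLambda (a : L -> K) : Prop :=
  linear_on_H0 a /\ (exists h, H0 h /\ a h != 0) /\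
  (exists v, v != 0 /\ weight_space a v).

Definition eqH0 (a b : L -> K) : Prop := forall h, H0 h -> a h = b h.

Definition oppf (a : L -> K) : L -> K := fun h => - a h.

(* alpha phi^{-n} := alpha o (phi|_{H_0})^{-n} *)
Definition rphi (a : L -> K) (n : nat) : L -> K := fun h => a (iter n phiinv h).

Definition split_alg : Prop :=
  (forall v, exists h n (a : 'I_n -> L -> K) (x : 'I_n -> L),
     H h /\ (forall i, inLambda (a i) /\ weight_space (a i) (x i)) /\
     v = h + \sum_(i < n) x i) /\
  (forall h n (a : 'I_n -> L -> K) (x : 'I_n -> L),
     H h -> (forall i, inLambda (a i) /\ weight_space (a i) (x i)) ->
     (forall i j, i != j -> ~ eqH0 (a i) (a j)) ->
     h + \sum_(i < n) x i = 0 -> h = 0 /\ forall i, x i = 0).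

Definition symmetric_roots : Prop :=
  forall a, inLambda a -> inLambda (oppf a).

Definition in_orbit (c a : L -> K) : Prop := exists n, eqH0 c (rphi a n).
Definition in_pm_orbit (c b : L -> K) : Prop :=
  exists m, eqH0 c (rphi b m) \/ eqH0 c (oppf (rphi b m)).

(* alpha_1 phi^{-i} + alpha_2 phi^{-i} + alpha_3 phi^{-i+1} + ... + alpha_{i+1} phi^{-1} *)
Definition psum (s : nat -> L -> K) (i : nat) : L -> K :=
  fun h => rphi (s 1%N) i h + \sum_(2 <= j < i.+2) rphi (s j) (i.+2 - j) h.

Definition connected (a b : L -> K) : Prop :=
  exists (k : nat) (s : nat -> L -> K),
    (1 <= k)%N /\ (forall j, (1 <= j <= k)%N -> inLambda (s j)) /\
    if k == 1%N then in_orbit (s 1%N) a /\ in_pm_orbit (s 1%N) b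
    else in_orbit (s 1%N) a /\
         (forall i, (1 <= i <= k - 2)%N -> inLambda (psum s i)) /\
         in_pm_orbit (psum s (k - 1)) b.

Definition inClass (a b : L -> K) : Prop := inLambda b /\ connected b a.

Definition HLam (a : L -> K) : L -> Prop :=
  span (fun w => exists b x y, inClass a b /\ weight_space b x /\
                  weight_space (oppf b) y /\ w = br x y).

Definition VLam (a : L -> K) (v : L) : Prop :=
  exists n (b : 'I_n -> L -> K) (x : 'I_n -> L),
    (forall i, inClass a (b i) /\ weight_space (b i) (x i)) /\
    v = \sum_(i < n) x i.

Definition LLam (a : L -> K) (v : L) : Prop :=
  exists h w, HLam a h /\ VLam a w /\ v = h + w.

Definition HLamAll : L -> Prop :=
  span (fun w => exists b x y, inLambda b /\ weight_space b x /\
                  weight_space (oppf b) y /\ w = br x y).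

Definition complement_in_H (U : L -> Prop) : Prop :=
  subspace U /\ (forall u, U u -> H u) /\
  (forall v, U v -> HLamAll v -> v = 0) /\
  (forall h, H h -> exists u w, U u /\ HLamAll w /\ h = u + w).

End HomLieColor.

(* Main.v *)
Require Import Defs.
From HB Require Import structures.
From mathcomp Require Import all_boot all_order all_algebra.
From mathcomp Require Import zify.
From Stdlib Require Import Classical ClassicalEpsilon.
Import GRing.Theory.
Local Open Scope ring_scope.

Local Notation oppf := Defs.oppf.
Local Notation span := Defs.span.
Local Notation in_orbit := Defs.in_orbit.

Set Implicit Arguments.
Unset Strict Implicit.

Section Generic.
Variables (K : fieldType) (G : zmodType) (L : lmodType K).

Lemma group_sum (I : finType) (g : I -> G) (x : I -> L) :
  \sum_i x i = \sum_(d <- undup (map g (enum I))) \sum_(i | g i == d) x i.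
Proof.
under [RHS]eq_bigr => d _ do rewrite big_mkcond.
rewrite exchange_big /=; apply: eq_bigr => i _.
rewrite -big_mkcond /= -big_filter.
have -> : [seq d <- undup [seq g i0 | i0 <- enum I] | g i == d] = [:: g i].
  rewrite -(@filter_pred1_uniq _ (undup [seq g i0 | i0 <- enum I]) (g i)) ?undup_uniq //.
    by apply: eq_filter => d /=; rewrite eq_sym.
  by rewrite mem_undup; apply: map_f; rewrite mem_enum.
by rewrite big_seq1.
Qed.

Lemma cat_fam (T : Type) n m (f1 : 'I_n -> T) (f2 : 'I_m -> T) :
  exists f : 'I_(n + m) -> T,
    (forall i, f (lshift m i) = f1 i) /\ (forall j, f (rshift n j) = f2 j).
Proof.
exists (fun i => match split i with inl j => f1 j | inr k => f2 k end).
split=> i.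
  by rewrite -[lshift m i]/(unsplit (inl i)) unsplitK.
by rewrite -[rshift n i]/(unsplit (inr i)) unsplitK.
Qed.

Lemma ord_split_cases n m (P : 'I_(n + m) -> Prop) :
  (forall i, P (lshift m i)) -> (forall j, P (rshift n j)) -> forall k, P k.
Proof.
move=> h1 h2 k; rewrite -(splitK k); case: (split k) => [a|b] /=; by [apply h1|apply h2].
Qed.

End Generic.

Section Main.
Variables (K : fieldType) (G : zmodType) (L : lmodType K).
Variables (br : L -> L -> L) (phi phiinv : L -> L) (eps : G -> G -> K)
  (grading : G -> L -> Prop) (H : L -> Prop).
Hypothesis hA : HomLieColorAlgebra br phi eps grading.
Hypothesis hc1 : cancel phi phiinv.
Hypothesis hc2 : cancel phiinv phi.
Hypothesis hmax : max_abelian_graded_subalgebra br phi grading H.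
Hypothesis hsplit : split_alg br phi grading H.
Hypothesis hsym : symmetric_roots br phi grading H.

Local Notation WS := (weight_space br phi grading H).
Local Notation Lam := (inLambda br phi grading H).
Local Notation H0' := (H0 grading H).
Local Notation eqh := (eqH0 grading H).
Local Notation rph := (rphi phiinv).
Local Notation conn := (connected br phi phiinv grading H).
Local Notation gr := grading.

Lemma gr_space : graded_space grading.
Proof. move: hA => [gs [bc [lL [lR [bg [pl [pg [ph [an jac]]]]]]]]]; exact: gs. Qed.
Lemma bichar : bicharacter eps.
Proof. move: hA => [gs [bc [lL [lR [bg [pl [pg [ph [an jac]]]]]]]]]; exact: bc. Qed.
Lemma brlinL (a : K) x y z : br (a *: x + y) z = a *: br x z + br y z.
Proof. move: hA => [gs [bc [lL [lR [bg [pl [pg [ph [an jac]]]]]]]]]; exact: lL. Qed.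
Lemma brlinR (a : K) x y z : br z (a *: x + y) = a *: br z x + br z y.
Proof. move: hA => [gs [bc [lL [lR [bg [pl [pg [ph [an jac]]]]]]]]]; exact: lR. Qed.
Lemma br_gr g h x y : gr g x -> gr h y -> gr (g + h) (br x y).
Proof. move: hA => [gs [bc [lL [lR [bg [pl [pg [ph [an jac]]]]]]]]]; exact: bg. Qed.
Lemma philin (a : K) x y : phi (a *: x + y) = a *: phi x + phi y.
Proof. move: hA => [gs [bc [lL [lR [bg [pl [pg [ph [an jac]]]]]]]]]; exact: pl. Qed.
Lemma phi_gr g x : gr g x -> gr g (phi x).
Proof. move: hA => [gs [bc [lL [lR [bg [pl [pg [ph [an jac]]]]]]]]]; exact: pg. Qed.
Lemma phi_br x y : phi (br x y) = br (phi x) (phi y).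
Proof. move: hA => [gs [bc [lL [lR [bg [pl [pg [ph [an jac]]]]]]]]]; exact: ph. Qed.
Lemma br_anti g h x y : gr g x -> gr h y -> br x y = - (eps g h *: br y x).
Proof. move: hA => [gs [bc [lL [lR [bg [pl [pg [ph [an jac]]]]]]]]]; exact: an. Qed.
Lemma jacobi gx gy gz x y z : gr gx x -> gr gy y -> gr gz z ->
     eps gz gx *: br (phi x) (br y z) + eps gx gy *: br (phi y) (br z x)
     + eps gy gz *: br (phi z) (br x y) = 0.
Proof. move: hA => [gs [bc [lL [lR [bg [pl [pg [ph [an jac]]]]]]]]]; exact: jac. Qed.

Lemma lin_facts (f : L -> L) : (forall (a : K) x y, f (a *: x + y) = a *: f x + f y) ->
  [/\ f 0 = 0, forall x y, f (x + y) = f x + f y, forall (a : K) x, f (a *: x) = a *: f x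
   & forall x, f (- x) = - f x].
Proof.
move=> hf.
have f0 : f 0 = 0.
  have h := hf 1 0 0; rewrite !scale1r addr0 in h.
  by apply: (addrI (f 0)); rewrite addr0 -h.
have fD x y : f (x + y) = f x + f y by have := hf 1 x y; rewrite !scale1r.
have fZ a x : f (a *: x) = a *: f x by have := hf a x 0; rewrite f0 !addr0.
split=> // x; by rewrite -scaleN1r fZ scaleN1r.
Qed.

Lemma lin_sum (f : L -> L) : (forall (a : K) x y, f (a *: x + y) = a *: f x + f y) ->
  forall (I : Type) (r : seq I) (P : pred I) (F : I -> L),
    f (\sum_(i <- r | P i) F i) = \sum_(i <- r | P i) f (F i).
Proof.
move=> /lin_facts [f0 fD _ _] I r P F.
by apply: (big_morph f fD f0).
Qed.

Lemma brL0 z : br 0 z = 0. Proof. by case: (lin_facts (fun a x y => brlinL a x y z)). Qed.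
Lemma brLD x y z : br (x + y) z = br x z + br y z.
Proof. by case: (lin_facts (fun a x y => brlinL a x y z)). Qed.
Lemma brLZ a x z : br (a *: x) z = a *: br x z.
Proof. by case: (lin_facts (fun a x y => brlinL a x y z)). Qed.
Lemma brLN x z : br (- x) z = - br x z.
Proof. by case: (lin_facts (fun a x y => brlinL a x y z)). Qed.
Lemma brL_sum (I : Type) (r : seq I) (P : pred I) (F : I -> L) z : br (\sum_(i <- r | P i) F i) z = \sum_(i <- r | P i) br (F i) z :> L.
Proof. exact: (lin_sum (fun a x y => brlinL a x y z)). Qed.
Lemma brR0 z : br z 0 = 0. Proof. by case: (lin_facts (fun a x y => brlinR a x y z)). Qed.
Lemma brRD x y z : br z (x + y) = br z x + br z y.
Proof. by case: (lin_facts (fun a x y => brlinR a x y z)). Qed.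
Lemma brRZ a x z : br z (a *: x) = a *: br z x.
Proof. by case: (lin_facts (fun a x y => brlinR a x y z)). Qed.
Lemma brRN x z : br z (- x) = - br z x.
Proof. by case: (lin_facts (fun a x y => brlinR a x y z)). Qed.
Lemma brR_sum (I : Type) (r : seq I) (P : pred I) (F : I -> L) z : br z (\sum_(i <- r | P i) F i) = \sum_(i <- r | P i) br z (F i) :> L.
Proof. exact: (lin_sum (fun a x y => brlinR a x y z)). Qed.
Lemma phi0 : phi 0 = 0. Proof. by case: (lin_facts philin). Qed.
Lemma phiD x y : phi (x + y) = phi x + phi y. Proof. by case: (lin_facts philin). Qed.
Lemma phiZ a x : phi (a *: x) = a *: phi x. Proof. by case: (lin_facts philin). Qed.
Lemma phiN x : phi (- x) = - phi x. Proof. by case: (lin_facts philin). Qed.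
Lemma phi_sum (I : Type) (r : seq I) (P : pred I) (F : I -> L) : phi (\sum_(i <- r | P i) F i) = \sum_(i <- r | P i) phi (F i) :> L.
Proof. exact: (lin_sum philin). Qed.
Lemma phi_inj : injective phi. Proof. exact: can_inj hc1. Qed.
Lemma phiinvlin (a : K) x y : phiinv (a *: x + y) = a *: phiinv x + phiinv y.
Proof. by apply: phi_inj; rewrite hc2 philin !hc2. Qed.
Lemma phiinv_br x y : phiinv (br x y) = br (phiinv x) (phiinv y).
Proof. by apply: phi_inj; rewrite hc2 phi_br !hc2. Qed.
Lemma phiinv0 : phiinv 0 = 0. Proof. by case: (lin_facts phiinvlin). Qed.

Lemma gr_sub g : subspace (gr g). Proof. by case: gr_space => h _; apply: h. Qed.
Lemma gr0 g : gr g 0. Proof. by case: (gr_sub g). Qed.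
Lemma grD g x y : gr g x -> gr g y -> gr g (x + y).
Proof. by case: (gr_sub g) => _ h hx hy; have := h 1 _ _ hx hy; rewrite scale1r. Qed.
Lemma grZ g a x : gr g x -> gr g (a *: x).
Proof. by case: (gr_sub g) => h0 h hx; have := h a _ _ hx h0; rewrite addr0. Qed.

Lemma sub_sum (S : L -> Prop) : subspace S -> forall (I : Type) (r : seq I) (P : pred I) F,
  (forall i, P i -> S (F i)) -> S (\sum_(i <- r | P i) F i).
Proof.
case=> S0 Sl I r P F hF; apply: (big_ind S) => //.
  by move=> x y hx hy; have := Sl 1 _ _ hx hy; rewrite scale1r.
Qed.
Lemma subD (S : L -> Prop) : subspace S -> forall x y, S x -> S y -> S (x + y).
Proof. by case=> _ h x y hx hy; have := h 1 _ _ hx hy; rewrite scale1r. Qed.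
Lemma subZ (S : L -> Prop) : subspace S -> forall a x, S x -> S (a *: x).
Proof. by case=> h0 h a x hx; have := h a _ _ hx h0; rewrite addr0. Qed.
Lemma subN (S : L -> Prop) : subspace S -> forall x, S x -> S (- x).
Proof. by move=> hS x hx; rewrite -scaleN1r; apply: subZ. Qed.

Lemma gr_decomp v : exists n (g : 'I_n -> G) (x : 'I_n -> L),
      injective g /\ (forall i, gr (g i) (x i)) /\ v = \sum_(i < n) x i.
Proof. by case: gr_space => _ [h _]; apply: h. Qed.
Lemma gr_uniq n (g : 'I_n -> G) (x : 'I_n -> L) :
  injective g -> (forall i, gr (g i) (x i)) -> \sum_(i < n) x i = 0 -> forall i, x i = 0.
Proof. by case: gr_space => _ [_ h]; apply: h. Qed.

Lemma eps0l c : eps 0 c = 1.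
Proof.
case: bichar => hnz [_ [_ h]].
have := h 0 0 c; rewrite addr0 => /eqP; rewrite -{1}[eps 0 c]mulr1 eq_sym.
by rewrite (inj_eq (mulfI (hnz 0 c))) => /eqP.
Qed.
Lemma eps0r c : eps c 0 = 1.
Proof.
case: bichar => hnz [_ [h _]].
have := h c 0 0; rewrite addr0 => /eqP; rewrite -{1}[eps c 0]mulr1 eq_sym.
by rewrite (inj_eq (mulfI (hnz c 0))) => /eqP.
Qed.
Lemma eps_inv a b : eps a b * eps b a = 1. Proof. by case: bichar => _ []. Qed.

Lemma H_sub : subspace H. Proof. by case: hmax => [[[[]]]]. Qed.
Lemma H_graded : graded_subspace grading H. Proof. by case: hmax => [[]]. Qed.
Lemma H_ab x y : H x -> H y -> br x y = 0. Proof. by case: hmax => _ [h _]; apply: h. Qed.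
Lemma H_phi x : H x -> H (phi x). Proof. by case: hmax => [[_ [_ [h _]]] _]; apply: h. Qed.
Lemma H_phiinv y : H y -> H (phiinv y).
Proof. case: hmax => [[_ [_ [_ h]]] _] /h [x [hx <-]]; by rewrite hc1. Qed.


Lemma GU (I : finType) (g : I -> G) (x : I -> L) :
  (forall i, gr (g i) (x i)) -> \sum_i x i = 0 ->
  forall d, \sum_(i | g i == d) x i = 0.
Proof.
move=> hx hs d.
set D := undup (map g (enum I)).
have uD : uniq D by rewrite undup_uniq.
pose y d := \sum_(i | g i == d) x i.
have hy e : gr e (y e).
  apply: (sub_sum (gr_sub e)) => i /eqP <-; exact: hx.
have hs' : \sum_(j < size D) y (nth 0 D j) = 0.
  rewrite -{}[RHS]hs (group_sum g x) [RHS](big_nth 0) big_mkord //.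
have hinj : injective (fun j : 'I_(size D) => nth 0 D j).
  move=> j k /= e; apply: val_inj; exact: (uniqP 0 uD) _ _ (ltn_ord j) (ltn_ord k) e.
have := gr_uniq hinj (fun j => hy _) hs'.
case: (boolP (d \in D)) => hd.
  have hi : (index d D < size D)%N by rewrite index_mem.
  move=> /(_ (Ordinal hi)) hh.
  by move: hh => /=; rewrite nth_index.
move=> _; apply: big_pred0 => i; apply/eqP => /eqP e.
by move: hd; rewrite -(eqP e) mem_undup map_f ?mem_enum.
Qed.

Lemma HD (I : finType) (g : I -> G) (x : I -> L) v d0 :
  gr d0 v -> (forall i, gr (g i) (x i)) -> v = \sum_i x i ->
  forall d, d != d0 -> \sum_(i | g i == d) x i = 0.
Proof.
move=> hv hx hvs d hd.
pose g' (i : I + unit) := match i with inl j => g j | inr _ => d0 end.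
pose x' (i : I + unit) := match i with inl j => x j | inr _ => - v end.
have hx' i : gr (g' i) (x' i).
  case: i => [j|u] /=; first exact: hx.
  exact: (subN (gr_sub _)).
have hs : \sum_i x' i = 0.
  rewrite big_sumType /= -hvs (big_pred1 tt); first by rewrite subrr.
  by case.
have := GU hx' hs d; rewrite big_sumType /=.
rewrite [X in _ + X]big_pred0 ?addr0 // => u.
by rewrite eq_sym (negbTE hd).
Qed.

Lemma inj_pick n (g : 'I_n -> G) (x : 'I_n -> L) i :
  injective g -> \sum_(j | g j == g i) x j = x i.
Proof.
move=> hg; apply: big_pred1 => j /=; apply/eqP/eqP; first exact: hg.
by move=> ->.
Qed.

Lemma H0_sub : subspace H0'.
Proof.
case: H_sub => h0 hl; case: (gr_sub 0) => g0 gl.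
split; first by split.
by move=> a x y [hx gx] [hy gy]; split; [apply: hl | apply: gl].
Qed.

Lemma phi_H0 h : H0' h -> H0' (phi h).
Proof. by case=> hh gh; split; [apply: H_phi | apply: phi_gr]. Qed.

Lemma phiinv_H0 h : H0' h -> H0' (phiinv h).
Proof.
case=> hh gh; split; first exact: H_phiinv.
case: H_graded => _ /(_ _ (H_phiinv hh)) [n [g [x [ig [hx ex]]]]].
have hphi : h = \sum_(i < n) phi (x i) by rewrite -phi_sum -ex hc2.
have hx0 i : g i != 0 -> x i = 0.
  move=> hgi; apply: phi_inj; rewrite phi0.
  have := HD gh (fun i => phi_gr (proj1 (hx i))) hphi hgi.
  by rewrite inj_pick.
rewrite ex; apply: (sub_sum (gr_sub 0)) => i _.
case: (eqVneq (g i) 0) => [<-|/hx0 ->]; [exact: (proj1 (hx i)) | exact: gr0].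
Qed.

Lemma iter_H0 n h : H0' h -> H0' (iter n phiinv h).
Proof. by elim: n => //= n IH /IH /phiinv_H0. Qed.


Lemma ws_eq a b v : eqh a b -> WS a v -> WS b v.
Proof. by move=> e hv h hh; rewrite -e // hv. Qed.

Lemma ws_sub a : subspace (WS a).
Proof.
split; first by move=> h _; rewrite brR0 phi0 scaler0.
by move=> c x y hx hy h hh; rewrite brlinR hx // hy // philin scalerDr !scalerA (mulrC c).
Qed.

Lemma ws_hom a v : WS a v -> exists n (g : 'I_n -> G) (x : 'I_n -> L),
  injective g /\ (forall i, gr (g i) (x i) /\ WS a (x i)) /\ v = \sum_(i < n) x i.
Proof.
move=> hv; have [n [g [x [ig [hx ev]]]]] := gr_decomp v.
exists n, g, x; split=> //; split=> // i; split=> // h hh.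
pose z j := br h (x j) - a h *: phi (x j).
have hz j : gr (g j) (z j).
  apply: (subD (gr_sub _)); last apply: (subN (gr_sub _)); last apply: grZ.
    by have := br_gr (proj2 hh) (hx j); rewrite add0r.
  exact: phi_gr.
have sz : \sum_(j < n) z j = 0.
  rewrite big_split /= -brR_sum sumrN -scaler_sumr -phi_sum -ev hv //.
  by rewrite subrr.
by apply/eqP; rewrite -subr_eq0; apply/eqP; exact: gr_uniq ig hz sz i.
Qed.

Lemma WI a (P : L -> Prop) : P 0 -> (forall c u v, P u -> P v -> P (c *: u + v)) ->
  (forall g x, gr g x -> WS a x -> P x) -> forall x, WS a x -> P x.
Proof.
move=> P0 Pl hh x /ws_hom [n [g [y [_ [hy ->]]]]].
apply: (sub_sum (conj P0 Pl)) => i _.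
by case: (hy i) => h1 h2; apply: hh h1 h2.
Qed.

Lemma phi_ws a v : WS a v -> WS (rph a 1) (phi v).
Proof.
move=> hv h hh; rewrite /rphi /=.
by rewrite -{1}(hc2 h) -phi_br hv ?phiZ //; apply: phiinv_H0.
Qed.

Lemma phiinv_ws a v : WS a v -> WS (fun h => a (phi h)) (phiinv v).
Proof.
move=> hv h hh; apply: phi_inj.
by rewrite phi_br hc2 hv ?phiZ ?hc2 //; apply: phi_H0.
Qed.

Lemma H_ws0 v : H v -> WS (fun _ => 0) v.
Proof. by move=> hv h [hh _]; rewrite H_ab // scale0r. Qed.

Lemma ws_br_hom a b gx gy x y : gr gx x -> gr gy y -> WS a x -> WS b y ->
  WS (rph (fun h => a h + b h) 1) (br x y).
Proof.
move=> gx_ gy_ hx hy h hh; rewrite /rphi /=.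
have hh' := phiinv_H0 hh.
have J := jacobi (proj2 hh') gx_ gy_.
rewrite hc2 eps0r eps0l !scale1r in J.
rewrite (br_anti gy_ (proj2 hh')) eps0r scale1r (hy _ hh') (hx _ hh') in J.
rewrite brRN !brRZ (br_anti (phi_gr gy_) (phi_gr gx_)) in J.
rewrite phi_br; set P := br (phi x) (phi y) in J *.
rewrite scalerN scalerA scalerN scalerA mulrCA eps_inv mulr1 in J.
apply/eqP; rewrite -subr_eq0 -J scalerDl opprD.
by rewrite addrA addrAC.
Qed.

Lemma ws_br a b x y : WS a x -> WS b y -> WS (rph (fun h => a h + b h) 1) (br x y).
Proof.
move=> hx hy; move: x hx; apply: WI.
- by rewrite brL0; case: (ws_sub (rph (fun h => a h + b h) 1)).
- by move=> c u v hu hv; rewrite brlinL; case: (ws_sub (rph (fun h => a h + b h) 1)) => _; apply.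
move=> gx x gx_ hx; move: y hy; apply: WI.
- by rewrite brR0; case: (ws_sub (rph (fun h => a h + b h) 1)).
- by move=> c u v hu hv; rewrite brlinR; case: (ws_sub (rph (fun h => a h + b h) 1)) => _; apply.
by move=> gy y gy_ hy; apply: ws_br_hom gx_ gy_ hx hy.
Qed.


Definition pb (P : Prop) : bool := if excluded_middle_informative P then true else false.
Lemma pbP (P : Prop) : reflect P (pb P).
Proof. by rewrite /pb; case: excluded_middle_informative => h; constructor. Qed.

Lemma eqh_refl a : eqh a a. Proof. by []. Qed.
Lemma eqh_sym a b : eqh a b -> eqh b a. Proof. by move=> e h hh; rewrite e. Qed.
Lemma eqh_trans a b c : eqh a b -> eqh b c -> eqh a c.
Proof. by move=> e1 e2 h hh; rewrite e1 // e2. Qed.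

Definition Ecl n (a : 'I_n -> L -> K) (j i : 'I_n) : bool := pb (eqh (a j) (a i)).
Definition Rp n (a : 'I_n -> L -> K) := [pred i : 'I_n | [forall j, Ecl a j i ==> (i <= j)%N]].

Lemma Ecl_sym n (a : 'I_n -> L -> K) i j : Ecl a i j = Ecl a j i.
Proof. by apply/pbP/pbP; apply: eqh_sym. Qed.
Lemma Ecl_trans n (a : 'I_n -> L -> K) i j k : Ecl a i j -> Ecl a j k -> Ecl a i k.
Proof. by move=> /pbP e1 /pbP e2; apply/pbP; apply: eqh_trans e1 e2. Qed.
Lemma Ecl_refl n (a : 'I_n -> L -> K) i : Ecl a i i.
Proof. by apply/pbP. Qed.

Lemma Rp_uniq n (a : 'I_n -> L -> K) i i' : i \in Rp a -> i' \in Rp a -> Ecl a i i' -> i = i'.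
Proof.
rewrite !inE => /forallP h1 /forallP h2 e.
apply: val_inj; apply/eqP; rewrite eqn_leq.
by rewrite (implyP (h1 i')) ?(implyP (h2 i)) // Ecl_sym.
Qed.

Definition rep n (a : 'I_n -> L -> K) (j : 'I_n) : 'I_n :=
  [arg min_(k < j | Ecl a k j) (k : nat)].

Lemma rep_spec n (a : 'I_n -> L -> K) j : rep a j \in Rp a /\ Ecl a (rep a j) j.
Proof.
rewrite /rep; case: arg_minnP; first exact: Ecl_refl.
move=> k hk hmin; split=> //; rewrite inE; apply/forallP => j'; apply/implyP => e.
by apply: hmin; apply: Ecl_trans e hk.
Qed.

Lemma class_sum n (a : 'I_n -> L -> K) (x : 'I_n -> L) :
  \sum_j x j = \sum_(i in Rp a) \sum_(j | Ecl a j i) x j.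
Proof.
under [RHS]eq_bigr do rewrite big_mkcond.
rewrite exchange_big /=; apply: eq_bigr => j _.
rewrite -big_mkcondr (big_pred1 (rep a j)) // => i /=.
case: (rep_spec a j) => r1 r2.
apply/andP/eqP.
  case=> hi e; apply: Rp_uniq hi r1 _; rewrite Ecl_sym in e.
  by apply: Ecl_trans e _; rewrite Ecl_sym.
by move=> ->; split=> //; rewrite Ecl_sym.
Qed.

Lemma Ecl_ws n (a : 'I_n -> L -> K) (x : 'I_n -> L) i :
  (forall j, WS (a j) (x j)) -> WS (a i) (\sum_(j | Ecl a j i) x j).
Proof.
move=> hx; apply: (sub_sum (ws_sub _)) => j /pbP e.
exact: ws_eq e (hx j).
Qed.

Lemma MU n (a : 'I_n -> L -> K) (x : 'I_n -> L) h : H h ->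
  (forall i, Lam (a i) /\ WS (a i) (x i)) -> h + \sum_(i < n) x i = 0 ->
  h = 0 /\ forall i, \sum_(j | Ecl a j i) x j = 0.
Proof.
move=> hh hx hs.
pose y i := \sum_(j | Ecl a j i) x j.
pose a' (k : 'I_#|Rp a|) := a (enum_val k).
pose x' (k : 'I_#|Rp a|) := y (enum_val k).
have hx' k : Lam (a' k) /\ WS (a' k) (x' k).
  split; first exact: (proj1 (hx _)).
  by apply: Ecl_ws => j; case: (hx j).
have hd k k' : k != k' -> ~ eqh (a' k) (a' k').
  move=> hkk e; move: hkk; rewrite -(inj_eq enum_val_inj).
  by rewrite (Rp_uniq (enum_valP k) (enum_valP k')) ?eqxx //; apply/pbP.
have hs' : h + \sum_(k < #|Rp a|) x' k = 0.
  by rewrite -big_enum_val -[X in _ = X]hs (class_sum a x).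
have [h0 x0] := (proj2 hsplit) h _ a' x' hh hx' hd hs'.
split=> // i.
case: (rep_spec a i) => r1 r2.
have -> : \sum_(j | Ecl a j i) x j = y (rep a i).
  apply: eq_bigl => j; apply/idP/idP => e.
    by apply: Ecl_trans e _; rewrite Ecl_sym.
  exact: Ecl_trans e r2.
have := x0 (enum_rank_in r1 (rep a i)).
by rewrite /x' enum_rankK_in.
Qed.


Lemma lam_eq a b : eqh a b -> Lam a -> Lam b.
Proof.
move=> e [lin [[h [hh nz]] [v [nv hv]]]]; split; last split.
- move=> c h1 h2 hh1 hh2; rewrite -!e //; first exact: lin.
  by case: H0_sub => _; apply.
- by exists h; rewrite -e.
by exists v; split=> //; apply: ws_eq hv.
Qed.

Lemma eqh_rph a b : eqh (rph a 1) (rph b 1) <-> eqh a b.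
Proof.
split=> e h hh; last by rewrite /rphi /= e //; apply: phiinv_H0.
by have := e _ (phi_H0 hh); rewrite /rphi /= hc1.
Qed.

Lemma eqh_rphn a b n : eqh a b -> eqh (rph a n) (rph b n).
Proof. by move=> e h hh; rewrite /rphi e //; apply: iter_H0. Qed.

Lemma rphS a n h : rph a n.+1 h = rph (rph a n) 1 h.
Proof. by rewrite /rphi /= -iterSr. Qed.

Lemma rph_add a n m h : rph a (n + m) h = rph (rph a n) m h.
Proof. by rewrite /rphi iterD. Qed.

Lemma lam_rph1 a : Lam a -> Lam (rph a 1).
Proof.
move=> [lin [[h [hh nz]] [v [nv hv]]]]; split; last split.
- move=> c h1 h2 hh1 hh2; rewrite /rphi /= phiinvlin; apply: lin; exact: phiinv_H0.
- by exists (phi h); split; [apply: phi_H0 | rewrite /rphi /= hc1].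
exists (phi v); split; last exact: phi_ws.
by apply: contra nv => /eqP e; apply/eqP; apply: phi_inj; rewrite e phi0.
Qed.

Lemma lam_rph a n : Lam a -> Lam (rph a n).
Proof.
move=> ha; elim: n => [|n IH]; first by apply: (lam_eq _ ha) => h _.
apply: (lam_eq _ (lam_rph1 IH)) => h _; by rewrite [RHS]rphS.
Qed.

Lemma lam_phi a : Lam a -> Lam (fun h => a (phi h)).
Proof.
move=> [lin [[h [hh nz]] [v [nv hv]]]]; split; last split.
- move=> c h1 h2 hh1 hh2 /=; rewrite philin; apply: lin; exact: phi_H0.
- by exists (phiinv h); split; [apply: phiinv_H0 | rewrite hc2].
exists (phiinv v); split; last exact: phiinv_ws.
by apply: contra nv => /eqP e; apply/eqP; rewrite -[v]hc2 e; apply: phi0.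
Qed.

Lemma lam_opp a : Lam a -> Lam (oppf a). Proof. exact: hsym. Qed.

Lemma ws_opp a v : WS a v -> WS (oppf (oppf a)) v.
Proof. by apply: ws_eq => h _; rewrite /oppf opprK. Qed.

Lemma ws0_H v : WS (fun _ => 0) v -> H v.
Proof.
move=> hv.
case: ((proj1 hsplit) v) => [h [n [a [x [hh [hx ev]]]]]].
suff: \sum_i x i = 0 by rewrite ev => ->; rewrite addr0.
rewrite (class_sum a x); apply: big1 => i _.
set y := \sum_(j | Ecl a j i) x j.
have [h0 [hh0 nz]] := proj1 (proj2 (proj1 (hx i))).
pose z j := a j h0 *: phi (x j).
have hz j : Lam (rph (a j) 1) /\ WS (rph (a j) 1) (z j).
  split; first exact: (lam_rph1 (proj1 (hx j))).
  by apply: (subZ (ws_sub _)); apply: phi_ws; case: (hx j).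
have sz : 0 + \sum_j z j = 0.
  rewrite add0r.
  have -> : \sum_j z j = \sum_j br h0 (x j).
    by apply: eq_bigr => j _; rewrite (proj2 (hx j)).
  have es : \sum_j x j = v - h by rewrite ev addrC addKr.
  rewrite -brR_sum es brRD brRN (hv _ hh0) (H_ab (proj1 hh0) hh).
  by rewrite scale0r subr0.
have [_ mz] := MU (a := fun j => rph (a j) 1) (proj1 H_sub) hz sz.
have := mz i.
have -> : \sum_(j | Ecl (fun j0 => rph (a j0) 1) j i) z j = a i h0 *: phi y.
  rewrite /y phi_sum scaler_sumr; apply: eq_big => j.
    by apply/pbP/pbP => e; apply/eqh_rph.
  by move=> /pbP /eqh_rph e; rewrite /z (e _ hh0).
move=> /eqP; rewrite scaler_eq0 (negbTE nz) /= => /eqP hy.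
by apply: phi_inj; rewrite hy phi0.
Qed.

Lemma genH a x y : WS a x -> WS (oppf a) y -> H (br x y).
Proof.
move=> hx hy; apply: ws0_H; apply: ws_eq (ws_br hx hy) => h _.
by rewrite /rphi /oppf /= subrr.
Qed.


Local Notation orb := (in_orbit phiinv grading H).
Local Notation pmorb := (in_pm_orbit phiinv grading H).
Local Notation ps := (psum phiinv).

Lemma iterC r q (h : L) : iter r phiinv (iter q phiinv h) = iter q phiinv (iter r phiinv h).
Proof. by rewrite -!iterD addnC. Qed.

Lemma rphS' a n h : rph a n.+1 h = rph a n (phiinv h).
Proof. by rewrite /rphi iterSr. Qed.

Lemma ps0 s h : ps s 0 h = s 1%N h.
Proof. by rewrite /psum big_geq // addr0. Qed.

Lemma psS s i h : ps s i.+1 h = ps s i (phiinv h) + s i.+2 (phiinv h).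
Proof.
rewrite /psum big_nat_recr //= rphS' addrA; congr (_ + _ + _); last by rewrite subSnn.
rewrite !big_nat; apply: eq_bigr => j /andP [_ hj].
rewrite subSn; last exact: ltnW.
by rewrite rphS'.
Qed.

Lemma ps_ext s t i : (forall j, (1 <= j <= i.+1)%N -> forall h, s j h = t j h) ->
  forall h, ps s i h = ps t i h.
Proof.
move=> e h; rewrite /psum /rphi e //; congr (_ + _).
rewrite !big_nat; apply: eq_bigr => j /andP [h1 h2]; rewrite e //.
by rewrite (leq_trans _ h1).
Qed.

Lemma ps_shift (e : K) r s i h :
  ps (fun j h => e * rph (s j) r h) i h = e * rph (ps s i) r h.
Proof.
rewrite /psum /rphi mulrDr mulr_sumr iterC; congr (_ + _).
by apply: eq_bigr => j _; rewrite iterC.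
Qed.

Lemma ps_track (u Q : nat -> L -> K) i0 N :
  eqh (ps u i0) (Q 0%N) ->
  (forall i, (i < N)%N -> eqh (Q i.+1) (rph (fun h => Q i h + u (i0 + i).+2 h) 1)) ->
  forall i, (i <= N)%N -> eqh (ps u (i0 + i)) (Q i).
Proof.
move=> h0 hs; elim=> [|i IH] hi; first by rewrite addn0.
move=> h hh; rewrite addnS psS (hs i hi h hh) /rphi /=.
by rewrite IH ?(ltnW hi) //; apply: phiinv_H0.
Qed.

Lemma pm_iff c b : pmorb c b <->
  exists m (e : K), (e = 1 \/ e = -1) /\ eqh c (fun h => e * rph b m h).
Proof.
split.
  case=> m [] e; exists m.
    by exists 1; split; [left | move=> h hh; rewrite mul1r e].
  by exists (-1); split; [right | move=> h hh; rewrite mulN1r e].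
case=> m [e [[] -> E]]; exists m.
  by left=> h hh; rewrite E // mul1r.
by right=> h hh; rewrite E // mulN1r.
Qed.

Lemma sign_sq (e : K) : e = 1 \/ e = -1 -> e * e = 1.
Proof. by case=> ->; rewrite ?mulr1 ?mulrNN ?mulr1. Qed.

Lemma lam_sign (e : K) a n : e = 1 \/ e = -1 -> Lam a -> Lam (fun h => e * rph a n h).
Proof.
move=> he ha; have hr := lam_rph n ha.
case: he => ->.
  by apply: (lam_eq _ hr) => h _; rewrite mul1r.
by apply: (lam_eq _ (lam_opp hr)) => h _; rewrite mulN1r.
Qed.

Lemma orb_eq c c' a : eqh c c' -> orb c a -> orb c' a.
Proof. by move=> e [n E]; exists n; apply: eqh_trans (eqh_sym e) E. Qed.
Lemma pm_eq c c' a : eqh c c' -> pmorb c a -> pmorb c' a.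
Proof.
move=> e [m [E|E]]; exists m; [left|right]; exact: eqh_trans (eqh_sym e) E.
Qed.

Definition chainP (a b : L -> K) k (s : nat -> L -> K) :=
  [/\ (1 <= k)%N, (forall j, (1 <= j <= k)%N -> Lam (s j)), orb (s 1%N) a,
      (forall i, (1 <= i <= k - 2)%N -> Lam (ps s i)) & pmorb (ps s (k - 1)) b].

Lemma conn_iff a b : conn a b <-> exists k s, chainP a b k s.
Proof.
split.
  case=> k [s [hk [hs HH]]]; exists k, s.
  case: (eqVneq k 1%N) HH => [ek|nk]; last first.
    by move=> -[o [hi p]]; split.
  subst k => -[o p]; split=> //.
    by move=> i /andP [h1 h2]; have := leq_trans h1 h2.
  by apply: pm_eq p => h _; rewrite ps0.
case=> k [s [hk hs o hi p]]; exists k, s; split=> //; split=> //.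
case: (eqVneq k 1%N) => [ek|nk] //.
subst k; split=> //.
by apply: pm_eq p => h _; rewrite ps0.
Qed.


Lemma conn1 c a b : Lam c -> orb c a -> pmorb c b -> conn a b.
Proof.
move=> hc o p; apply/conn_iff; exists 1%N, (fun _ => c); split=> //.
  by move=> i /andP [h1 h2]; have := leq_trans h1 h2.
by apply: pm_eq p => h _; rewrite ps0.
Qed.

Lemma conn_refl a : Lam a -> conn a a.
Proof. by move=> ha; apply: (conn1 ha); exists 0%N; [|left] => h _. Qed.

Lemma conn_rph a n : Lam a -> conn a (rph a n).
Proof. by move=> ha; apply: (conn1 (lam_rph n ha)); [exists n | exists 0%N; left] => h _. Qed.

Lemma conn_rph' a n : Lam a -> conn (rph a n) a.
Proof. by move=> ha; apply: (conn1 (lam_rph n ha)); [exists 0%N | exists n; left] => h _. Qed.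

Lemma conn_phi a : Lam a -> conn (fun h => a (phi h)) a.
Proof.
move=> ha; apply: (conn1 ha); [exists 1%N | exists 0%N; left] => h _ //.
by rewrite /rphi /= hc2.
Qed.

Lemma conn_opp a : Lam a -> conn a (oppf a).
Proof.
move=> ha; apply: (conn1 ha); [exists 0%N | exists 0%N; right] => h _ //.
by rewrite /rphi /oppf /= opprK.
Qed.

Lemma conn_sum a b : Lam a -> Lam b -> conn a (rph (fun h => a h + b h) 1).
Proof.
move=> ha hb; apply/conn_iff.
exists 2%N, (fun j => if j == 1%N then a else b); split=> //.
- by move=> j _; case: (j == 1%N).
- by exists 0%N => h _.
- by move=> i /andP [h1 h2]; have := leq_trans h1 h2.
exists 0%N; left=> h _.
by rewrite /= psS ps0.
Qed.

Lemma conn_sym a b : Lam b -> conn a b -> conn b a.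
Proof.
move=> hb /conn_iff [k [s [hk hs [n o] hi /pm_iff [m [e [he p]]]]]].
have hee := sign_sq he.
have hne : - e = 1 \/ - e = -1 by case: he => ->; [right | left; rewrite opprK].
pose t j := if j == 1%N then rph b m else (fun h => - e * rph (s (k - j + 2)%N) (2 * j - 3) h).
pose Q i := fun h => e * rph (ps s (k - 1 - i)) (2 * i) h.
have tr : forall i, (i <= k - 1)%N -> eqh (ps t (0 + i)) (Q i).
  apply: ps_track.
    move=> h hh; rewrite ps0 /Q /= subn0 /rphi /= (p _ hh) mulrA hee mul1r.
    by [].
  move=> i ilt h hh; rewrite /Q /t (_ : (i.+2 == 1%N) = false) // /rphi [iter 1 _ _]/=.
  have e1 : (k - 1 - i = (k - 1 - i.+1).+1)%N by lia.
  have e2 : (k - i.+2 + 2 = (k - 1 - i.+1).+2)%N by lia.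
  have e3 : (2 * i.+2 - 3 = (2 * i).+1)%N by lia.
  have e4 : (2 * i.+1 = (2 * i).+2)%N by lia.
  rewrite e1 e2 e3 e4.
  by rewrite psS -!iterSr -iterS mulNr -mulrN -mulrDr addrK.
apply/conn_iff; exists k, t; split=> //.
- move=> j /andP [h1 h2]; rewrite /t; case: eqP => [_|nj]; first exact: lam_rph.
  apply: lam_sign => //; apply: hs; apply/andP; split; lia.
- by exists m => h _.
- move=> i /andP [h1 h2]; apply: (lam_eq (eqh_sym (tr i _))); first lia.
  apply: lam_sign => //; apply: hi; apply/andP; split; lia.
have := tr (k - 1)%N (leqnn _); rewrite add0n => E.
apply/pm_iff; exists (n + 2 * (k - 1))%N, e; split=> //.
move=> h hh; rewrite (E _ hh) /Q subnn /rphi ps0 (o _ (iter_H0 _ hh)).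
by rewrite /rphi iterD.
Qed.

Lemma conn_trans a b c : conn a b -> conn b c -> conn a c.
Proof.
move=> /conn_iff [k [s [hk hs [n1 o1] hi1 /pm_iff [m1 [e1 [he1 p1]]]]]].
move=> /conn_iff [l [t [hl ht [n2 o2] hi2 /pm_iff [m2 [e2 [he2 p2]]]]]].
pose u j := if (j <= k)%N then (fun h => 1 * rph (s j) n2 h)
            else (fun h => e1 * rph (t (j - k).+1) m1 h).
pose Q i := fun h => e1 * rph (ps t i) m1 h.
have lo i : (i <= k - 1)%N -> forall h, ps u i h = 1 * rph (ps s i) n2 h.
  move=> hi h; rewrite -ps_shift; apply: ps_ext => j /andP [_ hj] h'.
  by rewrite /u (_ : (j <= k)%N = true) //; lia.
have tr : forall i, (i <= l - 1)%N -> eqh (ps u (k - 1 + i)) (Q i).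
  apply: ps_track.
    move=> h hh; rewrite lo // mul1r /Q /rphi ps0 (p1 _ (iter_H0 _ hh)).
    rewrite (o2 _ (iter_H0 _ hh)) /rphi; congr (_ * b _).
    by rewrite -!iterD addnC.
  move=> i ilt h hh; rewrite /Q -!ps_shift psS /u.
  rewrite (_ : (k - 1 + i).+2 <= k = false)%N; last by lia.
  rewrite (_ : ((k - 1 + i).+2 - k).+1 = i.+2)%N; last by lia.
  by rewrite ps_shift.
have hu j : (1 <= j <= k + l - 1)%N -> Lam (u j).
  move=> /andP [h1 h2]; rewrite /u; case: leqP => hj.
    by apply: lam_sign; [left | apply: hs; apply/andP; split].
  apply: lam_sign => //; apply: ht; apply/andP; split; lia.
apply/conn_iff; exists (k + l - 1)%N, u; split=> //.
- lia.
- exists (n1 + n2)%N => h hh.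
  rewrite /u (_ : (1 <= k)%N = true) // mul1r /rphi (o1 _ (iter_H0 _ hh)).
  by rewrite /rphi iterD.
- move=> i /andP [h1 h2].
  case: (leqP i (k - 2)) => hik.
    apply: (lam_eq _ (lam_sign n2 (or_introl erefl) (hi1 i _))).
      by move=> h _; rewrite lo //; lia.
    by apply/andP; split.
  have -> : i = (k - 1 + (i - (k - 1)))%N by lia.
  apply: (lam_eq (eqh_sym (tr _ _))); first lia.
  apply: lam_sign => //.
  case: (eqVneq (i - (k - 1)) 0)%N => [->|nz].
    by apply: (lam_eq _ (ht 1%N _)) => [h _|]; rewrite ?ps0 //; apply/andP; split.
  apply: hi2; apply/andP; split; lia.
have := tr (l - 1)%N (leqnn _).
rewrite (_ : k - 1 + (l - 1) = k + l - 1 - 1)%N; last by lia.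
move=> E; apply/pm_iff; exists (m2 + m1)%N, (e1 * e2); split.
  by case: he1 => ->; case: he2 => ->; rewrite ?mul1r ?mulN1r ?opprK; auto.
move=> h hh; rewrite (E _ hh) /Q /rphi (p2 _ (iter_H0 _ hh)) /rphi iterD.
by rewrite mulrA.
Qed.


Local Notation inCl := (inClass br phi phiinv grading H).
Local Notation HL := (HLam br phi phiinv grading H).
Local Notation VL := (VLam br phi phiinv grading H).
Local Notation LL := (LLam br phi phiinv grading H).

Lemma conn_eqh a a' : Lam a -> eqh a a' -> conn a' a /\ conn a a'.
Proof.
move=> ha e; split.
  by apply: (conn1 ha); [exists 0%N; exact: e | exists 0%N; left => h _].
by apply: (conn1 ha); [exists 0%N => h _ | exists 0%N; left; exact: e].
Qed.

Lemma cl_conn a c : inCl a c -> conn c a. Proof. by case. Qed.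

Lemma cl_iff a b : Lam a -> Lam b -> conn a b -> forall c, inCl a c <-> inCl b c.
Proof.
move=> ha hb ab c; split=> -[hc cc]; split=> //.
  exact (conn_trans cc ab).
exact: conn_trans cc (conn_sym hb ab).
Qed.

Lemma noconn_cl a b c d : Lam a -> inCl a c -> inCl b d -> ~ conn a b -> ~ conn c d.
Proof.
move=> ha [hc ca] [hd db] nab cd; apply: nab.
exact: conn_trans (conn_sym ha ca) (conn_trans cd db).
Qed.

Lemma span_sub (P : L -> Prop) : subspace (span P).
Proof.
split.
  by exists 0%N, (fun _ => 0), (fun _ => 0); split; [by case | by rewrite big_ord0].
move=> c x y [n [cx [wx [hx ->]]]] [m [cy [wy [hy ->]]]].
have [cc [cc1 cc2]] := cat_fam (fun i => c * cx i) cy.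
have [ww [ww1 ww2]] := cat_fam wx wy.
exists (n + m)%N, cc, ww; split.
  by apply: ord_split_cases => i; rewrite ?ww1 ?ww2.
rewrite big_split_ord /= scaler_sumr; congr (_ + _); apply: eq_bigr => i _.
  by rewrite cc1 ww1 scalerA.
by rewrite cc2 ww2.
Qed.

Lemma span_gen (P : L -> Prop) w : P w -> span P w.
Proof.
move=> hw; exists 1%N, (fun _ => 1), (fun _ => w); split=> //.
by rewrite big_ord1 scale1r.
Qed.

Lemma span_ind (P Q : L -> Prop) : subspace P -> (forall w, Q w -> P w) ->
  forall v, span Q v -> P v.
Proof.
move=> hP hQ v [n [c [w [hw ->]]]].
apply: (sub_sum hP) => i _; apply: (subZ hP); exact: hQ.
Qed.

Lemma VL_sub a : subspace (VL a).
Proof.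
split.
  by exists 0%N, (fun _ => a), (fun _ => 0); split; [by case | by rewrite big_ord0].
move=> c x y [n [bx [wx [hx ->]]]] [m [byy [wy [hy ->]]]].
have [bb [bb1 bb2]] := cat_fam bx byy.
have [ww [ww1 ww2]] := cat_fam (fun i => c *: wx i) wy.
exists (n + m)%N, bb, ww; split.
  apply: ord_split_cases => i; rewrite ?ww1 ?ww2 ?bb1 ?bb2.
    case: (hx i) => h1 h2; split=> //; exact: (subZ (ws_sub _)).
  exact: hy.
rewrite big_split_ord /= scaler_sumr; congr (_ + _); apply: eq_bigr => i _.
  by rewrite ww1.
by rewrite ww2.
Qed.

Lemma VL_gen a b x : inCl a b -> WS b x -> VL a x.
Proof.
move=> hb hx; exists 1%N, (fun _ => b), (fun _ => x); split=> //.
by rewrite big_ord1.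
Qed.

Lemma VL_ind a (P : L -> Prop) : subspace P ->
  (forall b x, inCl a b -> WS b x -> P x) -> forall v, VL a v -> P v.
Proof.
move=> hP hg v [n [b [x [hx ->]]]].
by apply: (sub_sum hP) => i _; case: (hx i) => h1 h2; apply: hg h1 h2.
Qed.

Lemma HL_gen a b x y : inCl a b -> WS b x -> WS (oppf b) y -> HL a (br x y).
Proof. by move=> hb hx hy; apply: span_gen; exists b, x, y. Qed.

Lemma HL_sub a : subspace (HL a). Proof. exact: span_sub. Qed.

Lemma LL_sub a : subspace (LL a).
Proof.
split.
  by exists 0, 0; split; [case: (HL_sub a) | split; [case: (VL_sub a) | rewrite addr0]].
move=> c x y [h1 [w1 [hh1 [hw1 ->]]]] [h2 [w2 [hh2 [hw2 ->]]]].
exists (c *: h1 + h2), (c *: w1 + w2); split.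
  by case: (HL_sub a) => _; apply.
split; first by case: (VL_sub a) => _; apply.
by rewrite scalerDr addrACA.
Qed.

Lemma HL_LL a v : HL a v -> LL a v.
Proof. by move=> hv; exists v, 0; split=> //; split; [case: (VL_sub a) | rewrite addr0]. Qed.
Lemma VL_LL a v : VL a v -> LL a v.
Proof. by move=> hv; exists 0, v; split; [case: (HL_sub a) | split; [|rewrite add0r]]. Qed.

Lemma LL_ind a (P : L -> Prop) : subspace P ->
  (forall b x y, inCl a b -> WS b x -> WS (oppf b) y -> P (br x y)) ->
  (forall b x, inCl a b -> WS b x -> P x) -> forall v, LL a v -> P v.
Proof.
move=> hP h1 h2 v [h [w [hh [hw ->]]]].
apply: (subD hP); last exact: (VL_ind hP h2).
apply: (span_ind hP) hh => _ [b [x [y [hb [hx [hy ->]]]]]].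
exact: h1 hb hx hy.
Qed.

Lemma HL_H a v : HL a v -> H v.
Proof.
apply: (span_ind H_sub) => _ [b [x [y [hb [hx [hy ->]]]]]].
exact: genH hx hy.
Qed.

Lemma ker_sub (f : L -> L) : (forall (c : K) x y, f (c *: x + y) = c *: f x + f y) ->
  subspace (fun v => f v = 0).
Proof.
move=> hf; split; first by case: (lin_facts hf).
by move=> c x y hx hy; rewrite hf hx hy scaler0 addr0.
Qed.

Lemma pre_sub (f : L -> L) (S : L -> Prop) :
  (forall (c : K) x y, f (c *: x + y) = c *: f x + f y) -> subspace S ->
  subspace (fun v => S (f v)).
Proof.
move=> hf [S0 Sl]; split; first by case: (lin_facts hf) => ->.
by move=> c x y hx hy; rewrite hf; apply: Sl.
Qed.

Lemma span_mono (P Q : L -> Prop) : (forall w, P w -> Q w) -> forall v, span P v -> span Q v.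
Proof. by move=> hPQ v [n [c [w [hw ->]]]]; exists n, c, w; split=> // i; apply: hPQ. Qed.

Lemma part1 a b : Lam a -> Lam b -> conn a b -> forall v, LL a v <-> LL b v.
Proof.
move=> ha hb ab.
have e : forall c, inCl a c <-> inCl b c := cl_iff ha hb ab.
have mono (a1 a2 : L -> K) : (forall c, inCl a1 c -> inCl a2 c) -> forall v, LL a1 v -> LL a2 v.
  move=> hm v [h [w [hh [hw ->]]]]; exists h, w; split; last split=> //.
    by move: hh; apply: span_mono => w0 [c [x [y [hc rest]]]]; exists c, x, y; split=> //; apply: hm.
  by case: hw => n [c [x [hx ->]]]; exists n, c, x; split=> // i; case: (hx i) => h1 h2; split=> //; apply: hm.
by move=> v; split; apply: mono => c /e.
Qed.


Lemma lin_rph_sum a b : Lam a -> Lam b -> linear_on_H0 grading H (rph (fun h => a h + b h) 1).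
Proof.
move=> [la _] [lb _] c h1 h2 hh1 hh2; rewrite /rphi /= phiinvlin.
have p1 := phiinv_H0 hh1; have p2 := phiinv_H0 hh2.
by rewrite la // lb // mulrDr addrACA.
Qed.

Lemma BC a b x y : Lam a -> Lam b -> WS a x -> WS b y ->
  br x y = 0 \/ eqh b (oppf a) \/
  (Lam (rph (fun h => a h + b h) 1) /\ WS (rph (fun h => a h + b h) 1) (br x y)).
Proof.
move=> ha hb hx hy.
case: (classic (eqh b (oppf a))) => ne; first by right; left.
case: (eqVneq (br x y) 0) => nz; first by left.
right; right; split; last exact: ws_br.
split; first exact: lin_rph_sum.
split; last by exists (br x y); split=> //; apply: ws_br.
have [h [hh nh]] : exists h, H0' h /\ a h + b h != 0.
  apply: NNPP => nex; apply: ne => h hh; apply/eqP; rewrite -addr_eq0 addrC.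
  by apply/negPn/negP => nh; apply: nex; exists h.
by exists (phi h); split; [apply: phi_H0 | rewrite /rphi /= hc1].
Qed.

Lemma conn_sum2 a b : Lam a -> Lam b -> Lam (rph (fun h => a h + b h) 1) ->
  conn b (rph (fun h => a h + b h) 1).
Proof.
move=> ha hb hab.
have e : eqh (rph (fun h => b h + a h) 1) (rph (fun h => a h + b h) 1).
  by move=> h _; rewrite /rphi /= addrC.
have hba : Lam (rph (fun h => b h + a h) 1) by apply: (lam_eq (eqh_sym e)).
exact: conn_trans (conn_sum hb ha) (proj2 (conn_eqh hba e)).
Qed.

Lemma Z1 a b x y : Lam a -> Lam b -> ~ conn a b -> WS a x -> WS b y -> br x y = 0.
Proof.
move=> ha hb nab hx hy.
case: (BC ha hb hx hy) => [//|[e|[hab _]]]; exfalso; apply: nab.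
  exact: conn_trans (conn_opp ha) (proj2 (conn_eqh (lam_opp ha) (eqh_sym e))).
exact: conn_trans (conn_sum ha hb) (conn_sym hab (conn_sum2 ha hb hab)).
Qed.

Lemma Z2hom a b gx gy x y : Lam a -> Lam b -> ~ conn a b -> gr gx x -> gr gy y ->
  WS a x -> WS (oppf a) y -> forall z, WS b z -> br z (br x y) = 0 /\ br (br x y) z = 0.
Proof.
move=> ha hb nab gx_ gy_ hx hy.
have hbp := lam_phi hb.
have h1 : forall z', WS (fun h => b (phi h)) z' -> br (phi z') (br x y) = 0.
  apply: WI.
  - by rewrite phi0 brL0.
  - by move=> c u v hu hv; rewrite philin brlinL hu hv scaler0 addr0.
  move=> gz z' gz_ hz.
  have J := jacobi gx_ gy_ gz_.
  have e1 : br y z' = 0.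
    apply: (Z1 (lam_opp ha) hbp) hy hz => c; apply: nab.
    exact: conn_trans (conn_opp ha) (conn_trans c (conn_phi hb)).
  have e2 : br z' x = 0.
    apply: (Z1 hbp ha) hz hx => c; apply: nab.
    apply: (conn_sym ha); exact: conn_trans (conn_sym hb (conn_phi hb)) c.
  rewrite e1 e2 !brR0 !scaler0 !add0r in J.
  move: J => /eqP; rewrite scaler_eq0; case/orP => [/eqP e|/eqP //].
  by case: bichar => nz _; move: (nz gy gz); rewrite e eqxx.
have h2 z : WS b z -> br z (br x y) = 0.
  by move=> hz; rewrite -(hc2 z); apply: h1; apply: phiinv_ws.
move=> z hz; split; first exact: h2.
move: z hz; apply: WI.
- by rewrite brR0.
- by move=> c u v hu hv; rewrite brlinR hu hv scaler0 addr0.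
move=> gz z gz_ hz.
by rewrite (br_anti (br_gr gx_ gy_) gz_) h2 // scaler0 oppr0.
Qed.

Lemma Z2 a b x y : Lam a -> Lam b -> ~ conn a b ->
  WS a x -> WS (oppf a) y -> forall z, WS b z -> br z (br x y) = 0 /\ br (br x y) z = 0.
Proof.
move=> ha hb nab hx hy; move: x hx y hy; apply: WI.
- by move=> y _ z _; rewrite !brL0 !brR0.
- move=> c u v hu hv y hy z hz.
  have [u1 u2] := hu y hy z hz; have [v1 v2] := hv y hy z hz.
  by split; [rewrite brlinL brlinR u1 v1 | rewrite !brlinL u2 v2]; rewrite scaler0 addr0.
move=> gx x gx_ hx; apply: WI.
- by move=> z _; rewrite !brR0 !brL0.
- move=> c u v hu hv z hz.
  have [u1 u2] := hu z hz; have [v1 v2] := hv z hz.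
  by split; [rewrite !brlinR u1 v1 | rewrite brlinR brlinL u2 v2]; rewrite scaler0 addr0.
move=> gy y gy_ hy; exact: Z2hom gx_ gy_ hx hy.
Qed.

Lemma part4 a b : Lam a -> Lam b -> ~ conn a b ->
  forall x y, LL a x -> LL b y -> br x y = 0.
Proof.
move=> ha hb nab.
have nba : ~ conn b a by move=> ba; apply: nab; apply: conn_sym ha ba.
move=> x y hx hy; move: x hx y hy.
apply: (LL_ind (P := fun x => forall y, LL b y -> br x y = 0)).
- split; first by move=> y _; rewrite brL0.
  by move=> c u v hu hv y hy; rewrite brlinL hu // hv // scaler0 addr0.
- move=> b1 u v hb1 hu hv; apply: (LL_ind (P := fun y => br (br u v) y = 0)).
  + by apply: ker_sub => c p q; rewrite brlinR.
  + move=> b2 u' v' hb2 hu' hv'; apply: H_ab; [exact: genH hu hv | exact: genH hu' hv'].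
  move=> b2 z hb2 hz.
  have := Z2 (proj1 hb1) (proj1 hb2) (noconn_cl ha hb1 hb2 nab) hu hv hz.
  by case.
move=> b1 x hb1 hx; apply: (LL_ind (P := fun y => br x y = 0)).
- by apply: ker_sub => c p q; rewrite brlinR.
- move=> b2 u' v' hb2 hu' hv'.
  have := Z2 (proj1 hb2) (proj1 hb1) (noconn_cl hb hb2 hb1 nba) hu' hv' hx.
  by case.
move=> b2 z hb2 hz.
exact: Z1 (proj1 hb1) (proj1 hb2) (noconn_cl ha hb1 hb2 nab) hx hz.
Qed.


Definition HS (X : L -> Prop) (v : L) : Prop :=
  exists n (g : 'I_n -> G) (x : 'I_n -> L),
    (forall i, gr (g i) (x i) /\ X (x i)) /\ v = \sum_(i < n) x i.

Lemma HS_sub X : subspace X -> subspace (HS X).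
Proof.
move=> hX; split.
  by exists 0%N, (fun _ => 0), (fun _ => 0); split; [case | rewrite big_ord0].
move=> c x y [n [gx [wx [hx ->]]]] [m [gy [wy [hy ->]]]].
have [gg [gg1 gg2]] := cat_fam gx gy.
have [ww [ww1 ww2]] := cat_fam (fun i => c *: wx i) wy.
exists (n + m)%N, gg, ww; split.
  apply: ord_split_cases => i; rewrite ?ww1 ?ww2 ?gg1 ?gg2.
    by case: (hx i) => h1 h2; split; [apply: grZ | apply: (subZ hX)].
  exact: hy.
rewrite big_split_ord /= scaler_sumr; congr (_ + _); apply: eq_bigr => i _.
  by rewrite ww1.
by rewrite ww2.
Qed.

Lemma HS_gen X g x : gr g x -> X x -> HS X x.
Proof.
by move=> h1 h2; exists 1%N, (fun _ => g), (fun _ => x); split; rewrite ?big_ord1.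
Qed.

Lemma HS_graded X : subspace X -> (forall v, X v -> HS X v) -> graded_subspace grading X.
Proof.
move=> hX hv; split=> // v /hv [n [g [x [hx ->]]]].
set D := undup (map g (enum 'I_n)).
have uD : uniq D by rewrite undup_uniq.
exists (size D), (fun j => nth 0 D j), (fun j => \sum_(i | g i == nth 0 D j) x i).
split.
  move=> j k /= e; apply: val_inj; exact: (uniqP 0 uD) _ _ (ltn_ord j) (ltn_ord k) e.
split.
  move=> j; split.
    by apply: (sub_sum (gr_sub _)) => i /eqP <-; case: (hx i).
  by apply: (sub_sum hX) => i _; case: (hx i).
by rewrite (group_sum g x) (big_nth 0) big_mkord.
Qed.

Lemma cl_rph1 a b : inCl a b -> inCl a (rph b 1).
Proof.
case=> hb ba; split; first exact: lam_rph1.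
exact: conn_trans (conn_rph' 1 hb) ba.
Qed.

Lemma cl_phi a b : inCl a b -> inCl a (fun h => b (phi h)).
Proof.
case=> hb ba; split; first exact: lam_phi.
exact: conn_trans (conn_phi hb) ba.
Qed.

Lemma LL0 a : LL a 0. Proof. by case: (LL_sub a). Qed.

Lemma LL_hs a v : LL a v -> HS (LL a) v.
Proof.
have hS := HS_sub (LL_sub a).
move: v; apply: LL_ind => //.
  move=> b u v hb hu hv; move: u hu v hv.
  apply: (WI (P := fun u => forall v, WS (oppf b) v -> HS (LL a) (br u v))).
  - by move=> v _; rewrite brL0; case: hS.
  - move=> c u1 u2 h1 h2 v hv; rewrite brlinL; case: hS => _; apply; [exact: h1 | exact: h2].
  move=> gx u gx_ hu; apply: (WI (P := fun v => HS (LL a) (br u v))).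
  - by rewrite brR0; case: hS.
  - by move=> c v1 v2 h1 h2; rewrite brlinR; case: hS => _; apply.
  move=> gy v gy_ hv; apply: (HS_gen (br_gr gx_ gy_)).
  by apply: HL_LL; apply: HL_gen hb hu hv.
move=> b x hb /ws_hom [n [g [y [_ [hy ->]]]]].
exists n, g, y; split=> // i; case: (hy i) => h1 h2; split=> //.
by apply: VL_LL; apply: VL_gen hb h2.
Qed.

Lemma br_H a z x : H z -> LL a x -> LL a (br x z).
Proof.
move=> hz; move: x; apply: (LL_ind (P := fun x => LL a (br x z))).
- by apply: pre_sub (LL_sub a) => c p q; rewrite brlinL.
- move=> b u v hb hu hv; rewrite H_ab; [exact: LL0 | exact: genH hu hv | exact: hz].
move=> b w hb hw; apply: VL_LL; apply: VL_gen (cl_rph1 hb) _.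
apply: ws_eq (ws_br hw (H_ws0 hz)) => h _; by rewrite /rphi /= addr0.
Qed.

Lemma br_W a d z x : Lam d -> WS d z -> LL a x -> LL a (br x z).
Proof.
move=> hd hz; move: x; apply: (LL_ind (P := fun x => LL a (br x z))).
- by apply: pre_sub (LL_sub a) => c p q; rewrite brlinL.
- move=> b u v [hb ba] hu hv.
  case: (classic (conn b d)) => bd; last first.
    by have [_ ->] := Z2 hb hd bd hu hv hz; apply: LL0.
  apply: VL_LL; apply: (VL_gen (b := rph d 1)).
    split; first exact: lam_rph1.
    exact: conn_trans (conn_rph' 1 hd) (conn_trans (conn_sym hd bd) ba).
  apply: ws_eq (ws_br (H_ws0 (genH hu hv)) hz) => h _; by rewrite /rphi /= add0r.
move=> b w [hb ba] hw.
case: (BC hb hd hw hz) => [->|[e|[hX wX]]]; first exact: LL0.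
  by apply: HL_LL; apply: HL_gen (conj hb ba) hw (ws_eq e hz).
apply: VL_LL; apply: VL_gen _ wX; split=> //.
exact: conn_trans (conn_sym hX (conn_sum hb hd)) ba.
Qed.

Lemma part2 a : Lam a -> ideal br phi grading (LL a).
Proof.
move=> ha; split; first exact: HS_graded (LL_sub a) (@LL_hs a).
split.
  move=> x y hx.
  case: ((proj1 hsplit) y) => [h [n [d [z [hh [hz ->]]]]]].
  rewrite brRD brR_sum; apply: (subD (LL_sub a)); first exact: br_H.
  apply: (sub_sum (LL_sub a)) => i _; case: (hz i) => h1 h2; exact: br_W h1 h2 hx.
split.
  apply: (LL_ind (P := fun x => LL a (phi x))).
  - by apply: pre_sub (LL_sub a) => c p q; rewrite philin.
  - move=> b u v hb hu hv; rewrite phi_br; apply: HL_LL.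
    exact: HL_gen (cl_rph1 hb) (phi_ws hu) (phi_ws hv).
  move=> b w hb hw; apply: VL_LL; exact: VL_gen (cl_rph1 hb) (phi_ws hw).
move=> y hy; exists (phiinv y); split; last exact: hc2.
move: y hy; apply: (LL_ind (P := fun x => LL a (phiinv x))).
- by apply: pre_sub (LL_sub a) => c p q; rewrite phiinvlin.
- move=> b u v hb hu hv; rewrite phiinv_br; apply: HL_LL.
  exact: HL_gen (cl_phi hb) (phiinv_ws hu) (phiinv_ws hv).
move=> b w hb hw; apply: VL_LL; exact: VL_gen (cl_phi hb) (phiinv_ws hw).
Qed.

Lemma part3 U : complement_in_H br phi grading H U ->
  forall v, exists u n (a : 'I_n -> L -> K) (x : 'I_n -> L),
     U u /\ (forall i, Lam (a i) /\ LL (a i) (x i)) /\ v = u + \sum_(i < n) x i.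
Proof.
move=> [_ [_ [_ Udec]]] v.
case: ((proj1 hsplit) v) => [h [n2 [a2 [x2 [hh [hx2 ->]]]]]].
have [u [w [hu [[n1 [c [w1 [hw1 ->]]]] ->]]]] := Udec h hh.
have hw1' i : { b | Lam b /\ exists x y, WS b x /\ WS (oppf b) y /\ w1 i = br x y }.
  apply: constructive_indefinite_description.
  by have [b [x [y [hb [hx [hy e]]]]]] := hw1 i; exists b; split=> //; exists x, y.
have [aa [aa1 aa2]] := cat_fam (fun i => sval (hw1' i)) a2.
have [xx [xx1 xx2]] := cat_fam (fun i => c i *: w1 i) x2.
exists u, (n1 + n2)%N, aa, xx; split=> //; split.
  apply: ord_split_cases => i; rewrite ?aa1 ?aa2 ?xx1 ?xx2.
    case: (hw1' i) => /= b [hb [x [y [hx [hy e]]]]]; split=> //.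
    apply: HL_LL; apply: (subZ (HL_sub _)); rewrite e.
    exact: HL_gen (conj hb (conn_refl hb)) hx hy.
  case: (hx2 i) => h1 h2; split=> //; apply: VL_LL.
  exact: VL_gen (conj h1 (conn_refl h1)) h2.
rewrite big_split_ord /= -addrA; congr (_ + (_ + _)); apply: eq_bigr => i _.
  by rewrite xx1.
by rewrite xx2.
Qed.

Lemma main_sec U : complement_in_H br phi grading H U ->
  (forall a b, Lam a -> Lam b -> conn a b -> forall v, LL a v <-> LL b v) /\
  (forall a, Lam a -> ideal br phi grading (LL a)) /\
  (forall v, exists u n (a : 'I_n -> L -> K) (x : 'I_n -> L),
     U u /\ (forall i, Lam (a i) /\ LL (a i) (x i)) /\ v = u + \sum_(i < n) x i) /\
  (forall a b, Lam a -> Lam b -> ~ conn a b ->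
     forall x y, LL a x -> LL b y -> br x y = 0).
Proof.
move=> hU; split; first exact: part1.
split; first exact: part2.
split; first exact: part3.
exact: part4.
Qed.

End Main.

Unset Implicit Arguments.
Set Strict Implicit.

Theorem mainTheorem10 (K : fieldType) (G : zmodType) (L : lmodType K)
  (br : L -> L -> L) (phi phiinv : L -> L) (eps : G -> G -> K)
  (grading : G -> L -> Prop) (H U : L -> Prop) :
  HomLieColorAlgebra br phi eps grading ->
  cancel phi phiinv -> cancel phiinv phi ->
  max_abelian_graded_subalgebra br phi grading H ->
  split_alg br phi grading H ->
  symmetric_roots br phi grading H ->
  complement_in_H br phi grading H U ->
  (* I_[alpha] is well defined *)
  (forall a b, inLambda br phi grading H a -> inLambda br phi grading H b ->
     connected br phi phiinv grading H a b ->
     forall v, LLam br phi phiinv grading H a v <-> LLam br phi phiinv grading H b v) /\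
  (* each I_[alpha] is an ideal *)
  (forall a, inLambda br phi grading H a ->
     ideal br phi grading (LLam br phi phiinv grading H a)) /\
  (* L = U + sum_[alpha] I_[alpha] *)
  (forall v, exists u n (a : 'I_n -> L -> K) (x : 'I_n -> L),
     U u /\ (forall i, inLambda br phi grading H (a i) /\
                       LLam br phi phiinv grading H (a i) (x i)) /\
     v = u + \sum_(i < n) x i) /\
  (* [I_[alpha], I_[beta]] = 0 for [alpha] <> [beta] *)
  (forall a b, inLambda br phi grading H a -> inLambda br phi grading H b ->
     ~ connected br phi phiinv grading H a b ->
     forall x y, LLam br phi phiinv grading H a x ->
                 LLam br phi phiinv grading H b y -> br x y = 0).
Proof.
move=> hA hc1 hc2 hmax hsplit hsym hU.
exact: (main_sec hA hc1 hc2 hmax hsplit hsym hU).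
Qed.
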